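(* Let $(G,w)$ be a weighted trigraph and let $R_1,R_2\subseteq V(G)$ be disjoint. Set $\alpha_{R_1}=\alpha(\mathrm{Red}[G,w;R_1])+\mathrm{Ext}[G,w;R_1]$ and $\alpha_{R_1\cup R_2}=\alpha(\mathrm{Red}[G,w;R_1\cup R_2])+\mathrm{Ext}[G,w;R_1\cup R_2]$. Then $\alpha_{R_1}\le\alpha_{R_1\cup R_2}\le\alpha_{R_1}+\sum_{u\in R_2}w(u)$.
   Context: A trigraph $G$ consists of a finite vertex set $V(G)$ and an adjacency function $\theta_G:\binom{V(G)}{2}\to\{-1,0,1\}$; for distinct $u,v$ write $uv$ for $\{u,v\}$; $uv$ is semi-adjacent if $\theta_G(uv)=0$, and $u,v$ are anti-adjacent if $\theta_G(uv)\le 0$. A stable set is a set of pairwise anti-adjacent vertices. For $X\subseteq V(G)$, $G[X]$ is the trigraph on $X$ with the restricted adjacency function. $\mathbb N$ denotes the non-negative integers. For a trigraph $G$ let $D(G)=V(G)\cup\{(u,v):u,v\in V(G),u\neq v\}\cup\binom{V(G)}{2}$. A weight function for $G$ is a map $w:D(G)\to\mathbb N$ such that for all distinct $u,v$: if $uv$ is not semi-adjacent then $w(u,v)=w(v,u)=w(uv)=0$, and $w(u,v)\le w(uv)$. A weighted trigraph is a pair $(G,w)$ with $w$ a weight function for $G$. The weight of $S\subseteq V(G)$ is $\llbracket S\rrbracket_{(G,w)}=\sum_{u\in S}w(u)+\sum_{u\in S}\sum_{v\in V(G)\setminus S}w(u,v)+\sum_{uv\in\binom{V(G)\setminus S}{2}}w(uv)$,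 and $\alpha(G,w)=\max\{\llbracket S\rrbracket_{(G,w)}: S \text{ a stable set of } G\}$. For $R\subseteq V(G)$, the reduction $\mathrm{Red}[G,w;R]$ is the weighted trigraph $(G[R],w')$ where $w'(u)=\max\{w(u)-\sum_{v\in V(G)\setminus R}(w(uv)-w(u,v)),0\}$ for $u\in R$, and $w'(u,v)=w(u,v)$, $w'(uv)=w(uv)$ for distinct $u,v\in R$. The exterior weight is $\mathrm{Ext}[G,w;R]=\sum_{uv\in\binom{V(G)\setminus R}{2}}w(uv)+\sum_{u\in R}\sum_{v\in V(G)\setminus R}w(uv)$. *)

(* Defs.v *)
From HB Require Import structures.
From mathcomp Require Import all_boot all_order all_algebra.
Set Implicit Arguments. Unset Strict Implicit. Unset Printing Implicit Defensive.
Import Order.TTheory GRing.Theory Num.Theory.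

(* A trigraph G has vertex set V (a finType); its adjacency function
   theta is defined on 2-element subsets {u,v} (as {set V}); values on
   other sets are irrelevant.  Induced subtrigraphs G[X] are represented by
   a vertex subset X together with the restriction of theta. *)

Definition is_trigraph (V : finType) (theta : {set V} -> int) : Prop :=
  forall u v : V, u != v ->
    (theta [set u; v] == (-1)%R) || (theta [set u; v] == 0%R) || (theta [set u; v] == 1%R).

(* A weight function: vertex weights wv, ordered-pair weights wd,
   unordered-pair weights wp (indexed by 2-element sets). *)
Definition is_weight (V : finType) (theta : {set V} -> int)
  (wv : V -> nat) (wd : V -> V -> nat) (wp : {set V} -> nat) : Prop :=
  forall u v : V, u != v ->
    (theta [set u; v] != 0%R ->
       wd u v = 0%N /\ wd v u = 0%N /\ wp [set u; v] = 0%N)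
    /\ (wd u v <= wp [set u; v])%N.

Definition pairs_in (V : finType) (Y : {set V}) : {set {set V}} :=
  [set e : {set V} | (e \subset Y) && (#|e| == 2)].

Definition wset (V : finType) (X : {set V})
  (wv : V -> nat) (wd : V -> V -> nat) (wp : {set V} -> nat) (S : {set V}) : nat :=
  (\sum_(u in S) wv u + \sum_(u in S) \sum_(v in X :\: S) wd u v
   + \sum_(e in pairs_in (X :\: S)) wp e)%N.

Definition stable (V : finType) (theta : {set V} -> int) (S : {set V}) : bool :=
  [forall u in S, forall v in S, (u != v) ==> (theta [set u; v] <= 0)%R].

Definition alpha (V : finType) (theta : {set V} -> int) (X : {set V})
  (wv : V -> nat) (wd : V -> V -> nat) (wp : {set V} -> nat) : nat :=
  \max_(S : {set V} | (S \subset X) && stable theta S) wset X wv wd wp S.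

(* vertex weights of Red[G,w;R]; truncated nat subtraction = max(.,0) *)
Definition red_wv (V : finType) (R : {set V})
  (wv : V -> nat) (wd : V -> V -> nat) (wp : {set V} -> nat) : V -> nat :=
  fun u => (wv u - \sum_(v in ~: R) (wp [set u; v] - wd u v))%N.

Definition ext (V : finType) (R : {set V}) (wp : {set V} -> nat) : nat :=
  (\sum_(e in pairs_in (~: R)) wp e
   + \sum_(u in R) \sum_(v in ~: R) wp [set u; v])%N.

Definition alpha_R (V : finType) (theta : {set V} -> int)
  (wv : V -> nat) (wd : V -> V -> nat) (wp : {set V} -> nat) (R : {set V}) : nat :=
  (alpha theta R (red_wv R wv wd wp) wd wp + ext R wp)%N.

(* Main.v *)
Require Import Defs.
From HB Require Import structures.
From mathcomp Require Import all_boot all_order all_algebra.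
From mathcomp Require Import zify.
Set Implicit Arguments. Unset Strict Implicit. Unset Printing Implicit Defensive.

Definition PP (V : finType) (wp : {set V} -> nat) (A : {set V}) :=
  (\sum_(e in pairs_in A) wp e)%N.
Definition XX (V : finType) (wp : {set V} -> nat) (A B : {set V}) :=
  (\sum_(a in A) \sum_(b in B) wp [set a; b])%N.
Definition WW (V : finType) (wd : V -> V -> nat) (A B : {set V}) :=
  (\sum_(a in A) \sum_(b in B) wd a b)%N.

Lemma disjI (T : finType) (A B : {set T}) :
  (forall x, x \in A -> x \in B -> False) -> [disjoint A & B].
Proof.
move=> H; rewrite disjoints_subset; apply/subsetP => x xA; rewrite inE.
by apply/negP => xB; exact: H x xA xB.
Qed.
Lemma disjE (T : finType) (A B : {set T}) x :
  [disjoint A & B] -> x \in A -> x \in B -> False.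
Proof. by move=> d xA; rewrite (disjointFr d xA). Qed.

Lemma sumU (V : finType) (F : V -> nat) (A B : {set V}) :
  [disjoint A & B] -> (\sum_(i in A :|: B) F i = \sum_(i in A) F i + \sum_(i in B) F i)%N.
Proof. by move=> d; rewrite -bigU //; apply: eq_bigl => i; rewrite !inE. Qed.

Lemma XXUl (V : finType) (wp : {set V} -> nat) (A B C : {set V}) : [disjoint A & B] ->
  XX wp (A :|: B) C = (XX wp A C + XX wp B C)%N.
Proof. by move=> d; rewrite /XX sumU. Qed.
Lemma XXUr (V : finType) (wp : {set V} -> nat) (A B C : {set V}) : [disjoint A & B] ->
  XX wp C (A :|: B) = (XX wp C A + XX wp C B)%N.
Proof. by move=> d; rewrite /XX -big_split; apply: eq_bigr => i _; rewrite sumU. Qed.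
Lemma WWUl (V : finType) (wd : V -> V -> nat) (A B C : {set V}) : [disjoint A & B] ->
  WW wd (A :|: B) C = (WW wd A C + WW wd B C)%N.
Proof. by move=> d; rewrite /WW sumU. Qed.
Lemma WWUr (V : finType) (wd : V -> V -> nat) (A B C : {set V}) : [disjoint A & B] ->
  WW wd C (A :|: B) = (WW wd C A + WW wd C B)%N.
Proof. by move=> d; rewrite /WW -big_split; apply: eq_bigr => i _; rewrite sumU. Qed.
Lemma XXC (V : finType) (wp : {set V} -> nat) (A B : {set V}) : XX wp A B = XX wp B A.
Proof. by rewrite /XX exchange_big; apply: eq_bigr => i _; apply: eq_bigr => j _; rewrite setUC. Qed.

Lemma WW_XX (V : finType) theta wv wd (wp : {set V} -> nat) (A B : {set V}) : is_weight theta wv wd wp ->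
  [disjoint A & B] -> (WW wd A B <= XX wp A B)%N.
Proof.
move=> hw d; apply: leq_sum => a aA; apply: leq_sum => b bB.
have ab : a != b.
  by apply/eqP => eab; apply: (disjE d aA); rewrite eab.
by case: (hw a b ab).
Qed.

Lemma PP_split (V : finType) (wp : {set V} -> nat) (A B : {set V}) : [disjoint A & B] ->
  PP wp (A :|: B) = (PP wp A + PP wp B + XX wp A B)%N.
Proof.
move=> d.
have dAB x : x \in A -> x \in B -> False.
  exact: disjE.
set Q := [set [set p.1; p.2] | p in setX A B].
have eq : pairs_in (A :|: B) = pairs_in A :|: pairs_in B :|: Q.
  apply/setP => e; rewrite !inE; apply/idP/idP.
  - case/andP => sub /cards2P [x [y [xy ee]]]; subst e.
    have := subsetP sub x (set21 x y); have := subsetP sub y (set22 x y).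
    rewrite !inE => hy hx.
    rewrite cards2 xy andbT.
    case/orP: hx => hx; case/orP: hy => hy.
    + by apply/orP; left; apply/orP; left; rewrite subUset !sub1set hx hy.
    + apply/orP; right; apply/imsetP; exists (x, y) => //; by rewrite inE hx hy.
    + apply/orP; right; apply/imsetP; exists (y, x); first by rewrite inE hx hy.
      by rewrite /= setUC.
    + by apply/orP; left; apply/orP; right; rewrite subUset !sub1set hx hy.
  - case/orP => [/orP [] | ].
    + case/andP => s c; rewrite c andbT; apply: subset_trans s _; exact: subsetUl.
    + case/andP => s c; rewrite c andbT; apply: subset_trans s _; exact: subsetUr.
    + case/imsetP => [[a b]]; rewrite inE /= => /andP [aA bB] ->.
      rewrite subUset !sub1set !inE aA bB orbT /= cards2.
      have -> : a != b by apply/eqP => eab; apply: (dAB a) => //; rewrite eab.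
      by [].
rewrite /PP eq sumU; last first.
  apply: disjI => e; rewrite !inE => /orP [] /andP [s1 _] /imsetP [[a b]];
    rewrite inE /= => /andP [aA bB] ee.
  + apply: (dAB b) => //; apply: (subsetP s1).
    by rewrite ee !inE eqxx orbT.
  + apply: (dAB a) => //; apply: (subsetP s1).
    by rewrite ee !inE eqxx.
rewrite sumU; last first.
  apply: disjI => e; rewrite !inE => /andP [s1 /cards2P [x [y [_ ex]]]] /andP [s2 _].
  have : x \in e by rewrite ex !inE eqxx.
  by move=> xe; apply: (dAB x); [apply: (subsetP s1) | apply: (subsetP s2)].
congr (_ + _)%N.
rewrite big_imset /=; last first.
  move=> [a b] [a' b']; rewrite !inE /= => /andP [aA bB] /andP [aA' bB'] E.
  have : a \in [set a'; b'] by rewrite -E !inE eqxx.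
  rewrite !inE => /orP [/eqP ea|/eqP ea]; last by exfalso; apply: (dAB a) => //; rewrite ea.
  have : b \in [set a'; b'] by rewrite -E !inE eqxx orbT.
  rewrite !inE => /orP [/eqP eb|/eqP eb]; first by exfalso; apply: (dAB b) => //; rewrite eb.
  by rewrite ea eb.
rewrite /XX pair_big /=; apply: eq_bigl => [[a b]]; by rewrite !inE.
Qed.

Definition cu (V : finType) (wd : V -> V -> nat) (wp : {set V} -> nat) (u : V) (C : {set V}) :=
  (\sum_(v in C) (wp [set u; v] - wd u v))%N.
Definition Xu (V : finType) (wp : {set V} -> nat) (u : V) (C : {set V}) :=
  (\sum_(v in C) wp [set u; v])%N.
Definition Wu (V : finType) (wd : V -> V -> nat) (u : V) (C : {set V}) :=
  (\sum_(v in C) wd u v)%N.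

Lemma cu_eq (V : finType) theta wv wd (wp : {set V} -> nat) u (C : {set V}) :
  is_weight theta wv wd wp -> u \notin C -> (cu wd wp u C + Wu wd u C = Xu wp u C)%N.
Proof.
move=> hw uC; rewrite /cu /Wu /Xu -big_split; apply: eq_bigr => v vC.
have uv : u != v by apply/eqP => e; move: uC; rewrite e vC.
case: (hw u v uv) => _ h; rewrite /= subnK //.
Qed.

Lemma cuU (V : finType) wd (wp : {set V} -> nat) u (A B : {set V}) :
  [disjoint A & B] -> cu wd wp u (A :|: B) = (cu wd wp u A + cu wd wp u B)%N.
Proof. by move=> d; rewrite /cu sumU. Qed.

Lemma wsetE (V : finType) (X : {set V}) rw wd wp (S : {set V}) :
  wset X rw wd wp S = (\sum_(u in S) rw u + WW wd S (X :\: S) + PP wp (X :\: S))%N.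
Proof. by []. Qed.
Lemma extE (V : finType) (R : {set V}) wp : ext R wp = (PP wp (~: R) + XX wp R (~: R))%N.
Proof. by []. Qed.
Lemma redE (V : finType) (R : {set V}) wv wd wp u :
  red_wv R wv wd wp u = (wv u - cu wd wp u (~: R))%N.
Proof. by []. Qed.

Lemma stable_sub (V : finType) theta (S T : {set V}) :
  T \subset S -> stable theta S -> stable theta T.
Proof.
move=> sTS /forallP hS; apply/forallP => u; apply/implyP => uT.
have /implyP := hS u => /(_ (subsetP sTS u uT)) /forallP h.
apply/forallP => v; apply/implyP => vT.
by have /implyP := h v => /(_ (subsetP sTS v vT)).
Qed.

Lemma alpha_ge (V : finType) theta (X : {set V}) rw wd wp (S : {set V}) :
  S \subset X -> stable theta S -> (wset X rw wd wp S <= alpha theta X rw wd wp)%N.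
Proof.
move=> sX st; rewrite /alpha.
have := @leq_bigmax_cond _ (fun S : {set V} => (S \subset X) && stable theta S) (wset X rw wd wp) S.
rewrite sX st => /(_ isT); exact.
Qed.

Lemma alpha_ex (V : finType) theta (X : {set V}) rw wd wp :
  exists2 S : {set V}, (S \subset X) && stable theta S & alpha theta X rw wd wp = wset X rw wd wp S.
Proof.
rewrite /alpha.
have h : (0 < #|[pred S : {set V} | (S \subset X) && stable theta S]|)%N.
  apply/card_gt0P; exists set0; rewrite inE sub0set /=.
  by apply/forallP => u; rewrite inE.
have [S0 hS0 e] := eq_bigmax_cond (wset X rw wd wp) h.
by exists S0; [move: hS0; rewrite inE | rewrite -e].
Qed.

Ltac slia := repeat match goal with
  | H : @eq (set_of _) _ _ |- _ => clear H
  | H : is_true [disjoint _ & _] |- _ => clear H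
  | H : is_weight _ _ _ _ |- _ => clear H end; lia.

Lemma upper_core (V : finType) theta wv wd (wp : {set V} -> nat)
  (R1 R2 S T U A B O : {set V}) :
  is_weight theta wv wd wp ->
  S = T :|: U -> (R1 :|: R2) :\: S = A :|: B -> ~: (R1 :|: R2) = O ->
  ~: R1 = U :|: B :|: O -> R1 :\: T = A ->
  R1 :|: R2 = T :|: U :|: A :|: B -> R1 = T :|: A -> R2 = U :|: B ->
  [disjoint T & U] -> [disjoint A & B] -> [disjoint U & B] -> [disjoint U :|: B & O] ->
  [disjoint T :|: U & A] -> [disjoint T :|: U :|: A & B] -> [disjoint T & A] ->
  [disjoint T & O] -> [disjoint U & A] -> [disjoint T & B] ->
  (wset (R1 :|: R2) (red_wv (R1 :|: R2) wv wd wp) wd wp S + ext (R1 :|: R2) wp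
   <= wset R1 (red_wv R1 wv wd wp) wd wp T + ext R1 wp + \sum_(u in R2) wv u)%N.
Proof.
move=> hw eS eRS eO eC1 eA eR eR1 eR2 dTU dAB dUB dUBO dTUA dTUAB dTA dTO dUA dTB.
rewrite !wsetE !extE.
have pu : (\sum_(u in T) red_wv (R1 :|: R2) wv wd wp u + WW wd T U + WW wd T B
   <= \sum_(u in T) red_wv R1 wv wd wp u + XX wp T U + XX wp T B)%N.
  rewrite /WW /XX -!big_split; apply: leq_sum => u uT /=.
  rewrite !redE eO eC1 !cuU //.
  have uU : u \notin U by apply/negP => uU; exact: (disjE dTU uT uU).
  have uB : u \notin B by apply/negP => uB; exact: (disjE dTB uT uB).
  have := cu_eq hw uU; have := cu_eq hw uB; rewrite /Wu /Xu; slia.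
have pU : (\sum_(u in U) red_wv (R1 :|: R2) wv wd wp u <= \sum_(u in U) wv u)%N.
  by apply: leq_sum => u _; rewrite redE leq_subr.
have w1 := WW_XX hw dUA. have w2 := WW_XX hw dUB.
have x1 : XX wp U A = XX wp A U by apply: XXC.
have e1 : (\sum_(u in S) red_wv (R1 :|: R2) wv wd wp u =
   \sum_(u in T) red_wv (R1 :|: R2) wv wd wp u + \sum_(u in U) red_wv (R1 :|: R2) wv wd wp u)%N.
  by rewrite eS sumU.
have e2 : WW wd S ((R1 :|: R2) :\: S) = (WW wd T A + WW wd T B + WW wd U A + WW wd U B)%N.
  by rewrite eRS eS WWUl // !WWUr //; slia.
have e3 : PP wp ((R1 :|: R2) :\: S) = (PP wp A + PP wp B + XX wp A B)%N by rewrite eRS PP_split.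
have e4 : PP wp (~: (R1 :|: R2)) = PP wp O by rewrite eO.
have e5 : XX wp (R1 :|: R2) (~: (R1 :|: R2)) = (XX wp T O + XX wp U O + XX wp A O + XX wp B O)%N.
  by rewrite eO eR !XXUl.
have e6 : WW wd T (R1 :\: T) = WW wd T A by rewrite eA.
have e7 : PP wp (R1 :\: T) = PP wp A by rewrite eA.
have e8 : PP wp (~: R1) = (PP wp U + PP wp B + XX wp U B + PP wp O + XX wp U O + XX wp B O)%N.
  rewrite eC1 PP_split // PP_split // XXUl //; slia.
have e9 : XX wp R1 (~: R1) = (XX wp T U + XX wp T B + XX wp T O + XX wp A U + XX wp A B + XX wp A O)%N.
  rewrite eC1 {1}eR1 XXUl // !XXUr //.
  all: try slia.
have e10 : (\sum_(u in R2) wv u = \sum_(u in U) wv u + \sum_(u in B) wv u)%N by rewrite {1}eR2 sumU.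
slia.
Qed.

Lemma lower_core (V : finType) theta wv wd (wp : {set V} -> nat)
  (R1 R2 S S' D A : {set V}) :
  is_weight theta wv wd wp ->
  S = S' :|: D -> R1 :\: S = A -> ~: R1 = R2 :|: ~: (R1 :|: R2) -> R1 = S' :|: D :|: A ->
  (R1 :|: R2) :\: S' = D :|: A :|: R2 -> R1 :|: R2 = S' :|: D :|: A :|: R2 ->
  (forall u, u \in S' -> cu wd wp u (~: R1) <= wv u)%N ->
  (forall u, u \in D -> wv u <= cu wd wp u (~: R1))%N ->
  [disjoint S' & D] -> [disjoint R2 & ~: (R1 :|: R2)] -> [disjoint S' :|: D & A] ->
  [disjoint D & A] -> [disjoint D :|: A & R2] -> [disjoint S' :|: D :|: A & R2] ->
  [disjoint S' & R2] ->
  (wset R1 (red_wv R1 wv wd wp) wd wp S + ext R1 wp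
   <= wset (R1 :|: R2) (red_wv (R1 :|: R2) wv wd wp) wd wp S' + ext (R1 :|: R2) wp)%N.
Proof.
move=> hw eS eA eC1 eR1 eRS eR hS' hD dS'D dR2O dS'DA dDA dDAR2 dall dS'R2.
rewrite !wsetE !extE.
have pu : (\sum_(u in S') red_wv R1 wv wd wp u + XX wp S' R2
   = \sum_(u in S') red_wv (R1 :|: R2) wv wd wp u + WW wd S' R2)%N.
  rewrite /WW /XX -!big_split; apply: eq_bigr => u uS /=.
  have := hS' u uS; rewrite !redE eC1 !cuU //.
  have uR2 : u \notin R2 by apply/negP => uR; exact: (disjE dS'R2 uS uR).
  have := cu_eq hw uR2; rewrite /Wu /Xu; slia.
have pD : (\sum_(u in D) red_wv R1 wv wd wp u = 0)%N.
  by apply: big1 => u uD; rewrite redE; apply/eqP; rewrite subn_eq0; exact: hD.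
have w1 := WW_XX hw dDA.
have l1 : (\sum_(u in S) red_wv R1 wv wd wp u =
   \sum_(u in S') red_wv R1 wv wd wp u + \sum_(u in D) red_wv R1 wv wd wp u)%N.
  by rewrite eS sumU.
have l2 : WW wd S (R1 :\: S) = (WW wd S' A + WW wd D A)%N by rewrite eA eS WWUl.
have l3 : PP wp (R1 :\: S) = PP wp A by rewrite eA.
have l4 : PP wp (~: R1) = (PP wp R2 + PP wp (~: (R1 :|: R2)) + XX wp R2 (~: (R1 :|: R2)))%N by rewrite eC1 PP_split.
have l5 : XX wp R1 (~: R1) = (XX wp S' R2 + XX wp D R2 + XX wp A R2 + XX wp S' (~: (R1 :|: R2)) + XX wp D (~: (R1 :|: R2)) + XX wp A (~: (R1 :|: R2)))%N.
  rewrite eC1 {1}eR1 !XXUl // !XXUr //; slia.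
have r2 : WW wd S' ((R1 :|: R2) :\: S') = (WW wd S' D + WW wd S' A + WW wd S' R2)%N.
  by rewrite eRS !WWUr.
have r3 : PP wp ((R1 :|: R2) :\: S') = (PP wp D + PP wp A + XX wp D A + PP wp R2 + XX wp D R2 + XX wp A R2)%N.
  rewrite eRS PP_split // PP_split // XXUl //; slia.
have r5 : XX wp (R1 :|: R2) (~: (R1 :|: R2)) = (XX wp S' (~: (R1 :|: R2)) + XX wp D (~: (R1 :|: R2)) + XX wp A (~: (R1 :|: R2)) + XX wp R2 (~: (R1 :|: R2)))%N.
  by rewrite {1}eR !XXUl.
slia.
Qed.

Ltac mcase4 hS hd x a b c e :=
  move: (hS x) (hd x); rewrite ?inE; case: a; case: b; case: c; case: e => //=.
Ltac mcase3 hS hd x a b c :=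
  move: (hS x) (hd x); rewrite ?inE; case: a; case: b; case: c => //=.

Theorem proposition3p8 (V : finType) (theta : {set V} -> int)
  (wv : V -> nat) (wd : V -> V -> nat) (wp : {set V} -> nat)
  (R1 R2 : {set V}) :
  is_trigraph theta -> is_weight theta wv wd wp -> [disjoint R1 & R2] ->
  (alpha_R theta wv wd wp R1 <= alpha_R theta wv wd wp (R1 :|: R2)
   <= alpha_R theta wv wd wp R1 + \sum_(u in R2) wv u)%N.
Proof.
move=> _ hw d.
have hd x : ~~ ((x \in R1) && (x \in R2)).
  by apply/negP => /andP [a b]; exact: (disjE d a b).
apply/andP; split.
- rewrite /alpha_R.
  have [S /andP [sS st] ->] := alpha_ex theta R1 (red_wv R1 wv wd wp) wd wp.
  have hS x : (x \in S) ==> (x \in R1) by apply/implyP => /(subsetP sS).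
  pose S' := [set u in S | (cu wd wp u (~: R1) <= wv u)%N].
  have sS' : S' \subset R1 :|: R2.
    by apply/subsetP => x; rewrite !inE => /andP [/(subsetP sS) -> _].
  have st' : stable theta S' by apply: stable_sub st; apply/subsetP => x; rewrite inE => /andP [].
  apply: leq_trans (lower_core (R2 := R2) (S := S) (S' := S') (D := S :\: S') (A := R1 :\: S) hw _ _ _ _ _ _ _ _ _ _ _ _ _ _ _) _.
  all: try (apply/setP => x; mcase4 hS hd x (x \in S) (x \in R1) (x \in R2) (cu wd wp x (~: R1) <= wv x)%N; fail).
  all: try (apply: disjI => x; mcase4 hS hd x (x \in S) (x \in R1) (x \in R2) (cu wd wp x (~: R1) <= wv x)%N; fail).
  all: try (move=> u; rewrite !inE => /andP [] //).
  all: try (move=> h uS; move: h; rewrite uS /= -ltnNge => /ltnW; done).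
  rewrite leq_add2r; exact: alpha_ge.
- rewrite /alpha_R.
  have [S /andP [sS st] ->] := alpha_ex theta (R1 :|: R2) (red_wv (R1 :|: R2) wv wd wp) wd wp.
  have hS x : (x \in S) ==> ((x \in R1) || (x \in R2)).
    by apply/implyP => /(subsetP sS); rewrite inE.
  apply: leq_trans (upper_core (R1 := R1) (R2 := R2) (S := S) (T := S :&: R1) (U := S :&: R2)
     (A := R1 :\: S) (B := R2 :\: S) (O := ~: (R1 :|: R2)) hw _ _ _ _ _ _ _ _ _ _ _ _ _ _ _ _ _ _) _.
  all: try (apply/setP => x; mcase3 hS hd x (x \in S) (x \in R1) (x \in R2); fail).
  all: try (apply: disjI => x; mcase3 hS hd x (x \in S) (x \in R1) (x \in R2); fail).
  rewrite leq_add2r leq_add2r; apply: alpha_ge; first exact: subsetIr.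
  by apply: stable_sub st; exact: subsetIl.
Qed.
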